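(* For every positive integer $n$, the morphism $\mathrm{Hank}_n\times\phi_n:\mathcal{F}_n\to\mathcal{H}_n\times\mathbf{A}^1$ is a $\mathbf{G}_a$-equivariant isomorphism of schemes.
   Context: Let $k$ be a field; schemes are over $k$. For a $k$-algebra $R$, $\mathcal{F}_n(R)$ is the set of pairs $(A,B)$ of polynomials in $R[X]$ with $A$ monic of degree $n$, $\deg B<n$, $\mathrm{res}_{n,n}(A,B)\in R^\times$. $\mathcal{H}_n$ is the closed subscheme of non-degenerate symmetric $n\times n$ matrices consisting of Hankel matrices (entries $s_{p,q}$ depending only on $p+q$). Bézout form: writing $\frac{A(X)B(Y)-A(Y)B(X)}{X-Y}=\sum_{1\le p,q\le n}c_{p,q}X^{p-1}Y^{q-1}$, $\mathrm{B\acute{e}z}_n(A,B)=[c_{p,q}]$, an invertible symmetric matrix; $\mathrm{Hank}_n(A,B):=\mathrm{B\acute{e}z}_n(A,B)^{-1}$, which is a Hankel matrix. $\phi_n(A,B)$ is the opposite of the coefficient of $X^{n-1}$ in $V_1$, where $(U_1,V_1)$ is the unique pair of polynomials with $\deg U_1=n-1$, $\deg V_1\le n-1$, $AU_1+BV_1=X^{2n-1}$. $\mathbf{G}_a$ acts on $\mathcal{F}_n$ by $h\cdot\frac{A}{B}=\frac{A+hB}{B}$, trivially on $\mathcal{H}_n$, and by translation on $\mathbf{A}^1$. *)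

(* Defs.v *)
(* Affine schemes are handled through their functor of points
   on commutative k-algebras. *)
From HB Require Import structures.
From mathcomp Require Import all_boot all_order all_algebra.
From Stdlib Require Import ClassicalEpsilon.
Set Implicit Arguments.
Unset Strict Implicit.
Unset Printing Implicit Defensive.
Import Order.TTheory GRing.Theory Num.Theory.
Local Open Scope ring_scope.

Section Defs.
Variable R : comUnitRingType.

Definition sylv_nn (n : nat) (A B : {poly R}) : 'M[R]_(n + n) :=
  \matrix_(i < n + n, j < n + n)
    match split i with
    | inl i' => ('X^i' * A)`_j
    | inr i' => ('X^i' * B)`_j
    end.

Definition res_nn (n : nat) (A B : {poly R}) : R := \det (sylv_nn n A B).

Definition inF (n : nat) (A B : {poly R}) : Prop :=
  [/\ A \is monic, size A = n.+1, (size B <= n)%N & res_nn n A B \is a GRing.unit].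

(* Bivariate polynomials: {poly {poly R}}, outer variable X, inner variable Y.
   A(X) = A^:P, A(Y) = A%:P. *)
Definition bez_num (A B : {poly R}) : {poly {poly R}} :=
  A^:P * B%:P - A%:P * B^:P.

(* (A(X)B(Y) - A(Y)B(X)) / (X - Y), exact division by a monic polynomial *)
Definition bez_quot (A B : {poly R}) : {poly {poly R}} :=
  Pdiv.CommonRing.rdivp (bez_num A B) ('X - ('X)%:P).

(* Bez_n(A,B) = [c_{p,q}], c_{p,q} the coefficient of X^(p-1) Y^(q-1)
   (0-indexed here: entry (p,q) is the coefficient of X^p Y^q). *)
Definition Bez (n : nat) (A B : {poly R}) : 'M[R]_n :=
  \matrix_(p < n, q < n) ((bez_quot A B)`_p)`_q.

Definition Hank (n : nat) (A B : {poly R}) : 'M[R]_n := invmx (Bez n A B).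

Definition is_hankel (n : nat) (M : 'M[R]_n) : Prop :=
  forall p q p' q' : 'I_n, (p + q = p' + q')%N -> M p q = M p' q'.

Definition inH (n : nat) (M : 'M[R]_n) : Prop :=
  [/\ M^T = M, M \in unitmx & is_hankel M].

(* The pair (U_1, V_1): deg U_1 = n-1 (i.e. size n), deg V_1 <= n-1,
   A U_1 + B V_1 = X^(2n-1).  Chosen by Hilbert's epsilon; it is unique on F_n. *)
Definition UV1_spec (n : nat) (A B : {poly R}) (UV : {poly R} * {poly R}) : Prop :=
  [/\ size UV.1 = n, (size UV.2 <= n)%N & A * UV.1 + B * UV.2 = 'X^((n + n).-1)].

Definition UV1 (n : nat) (A B : {poly R}) : {poly R} * {poly R} :=
  epsilon (inhabits (0, 0)) (UV1_spec n A B).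

Definition phi (n : nat) (A B : {poly R}) : R := - (UV1 n A B).2`_n.-1.

End Defs.

(* Main.v *)
Require Import Defs.
From HB Require Import structures.
From mathcomp Require Import all_boot all_order all_algebra.
From mathcomp Require Import ring zify.
From Stdlib Require Import ClassicalEpsilon.
Import GRing.Theory.
Local Open Scope ring_scope.
Import Pdiv.Ring Pdiv.RingMonic.
Set Implicit Arguments. Unset Strict Implicit.

Section P.
Variable R : comUnitRingType.
Implicit Types A B C U V W T g : {poly R}.

Definition Dp (f : {poly R}) : {poly {poly R}} := \poly_(p < size f) drop_poly p.+1 f.

Lemma coef_Dp f p : (Dp f)`_p = drop_poly p.+1 f.
Proof.
rewrite /Dp coef_poly; case: ltnP => // h.
by rewrite drop_poly_eq0 // (leq_trans h).
Qed.

Lemma Dp_spec f : ('X - ('X)%:P) * Dp f = f^:P - f%:P.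
Proof.
apply/polyP => p; apply/polyP => j.
rewrite mulrBl !coefD !coefN coefXM coefCM coef_Dp coef_map /= !coefC.
case: p => [|p] /=.
  rewrite coef0 coefXM coef_Dp coef_drop_poly.
  by case: j => [|j] /=; rewrite ?subrr ?sub0r ?addn1.
rewrite coef_Dp coefXM !coef_drop_poly coef0.
case: j => [|j] /=; rewrite ?add0n ?subr0 ?sub0r //.
by rewrite addSn -addnS subrr.
Qed.

Lemma bez_quotE A B : bez_quot A B = B%:P * Dp A - A%:P * Dp B.
Proof.
rewrite /bez_quot.
have -> : bez_num A B = (B%:P * Dp A - A%:P * Dp B) * ('X - ('X)%:P).
  rewrite mulrBl -!mulrA ![Dp _ * _]mulrC !Dp_spec /bez_num.
  ring.
by rewrite rdivp_mull // monicXsubC.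
Qed.

Definition beta A B p := B * drop_poly p.+1 A - A * drop_poly p.+1 B.

Lemma coef_bez A B p : (bez_quot A B)`_p = beta A B p.
Proof. by rewrite bez_quotE coefB !coefCM !coef_Dp. Qed.

Lemma betaE A B p : beta A B p =
  drop_poly p.+1 A * take_poly p.+1 B - take_poly p.+1 A * drop_poly p.+1 B.
Proof.
rewrite /beta -[X in _ - X * _](poly_take_drop p.+1 A) -[X in X * drop_poly _ A](poly_take_drop p.+1 B).
ring.
Qed.

Lemma size_beta n A B p : size A = n.+1 -> (size B <= n)%N -> (p < n)%N ->
  (size (beta A B p) <= n)%N.
Proof.
move=> sA sB pn; rewrite betaE.
apply: (leq_trans (size_add _ _)); rewrite geq_max; apply/andP; split.
  apply: (leq_trans (size_mul_leq _ _)).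
  have := size_take_poly p.+1 B; rewrite size_drop_poly sA; lia.
rewrite size_opp; apply: (leq_trans (size_mul_leq _ _)).
have := size_take_poly p.+1 A; rewrite size_drop_poly; move: sB pn; move: (size (take_poly _ _)) (size B) => a b; lia.
Qed.

Lemma poly_size_id (f : {poly R}) m : (size f <= m)%N -> \poly_(i < m) f`_i = f.
Proof.
move=> h; apply/polyP => i; rewrite coef_poly; case: ltnP => // hi.
by rewrite nth_default // (leq_trans h hi).
Qed.

Lemma sum_coefX (f : {poly R}) m : (size f <= m)%N -> \sum_(q < m) f`_q *: 'X^q = f.
Proof. by move=> h; rewrite -poly_def poly_size_id. Qed.

Section Tau.
Variables (n : nat) (A : {poly R}).
Hypotheses (mA : A \is monic) (sA : size A = n.+1).

Definition tau g := (rmodp g A)`_n.-1.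

Lemma tau_small g : (size g <= n)%N -> tau g = g`_n.-1.
Proof. by move=> h; rewrite /tau rmodp_small // sA ltnS. Qed.

Lemma tauD g h : tau (g + h) = tau g + tau h.
Proof. by rewrite /tau rmodpD // coefD. Qed.

Lemma tauN g : tau (- g) = - tau g.
Proof. by rewrite /tau rmodpN // coefN. Qed.

Lemma tauB g h : tau (g - h) = tau g - tau h.
Proof. by rewrite tauD tauN. Qed.

Lemma tauZ c g : tau (c *: g) = c * tau g.
Proof. by rewrite /tau rmodpZ // coefZ. Qed.

Lemma tau_sum m (F : 'I_m -> {poly R}) : tau (\sum_(i < m) F i) = \sum_(i < m) tau (F i).
Proof.
elim/big_rec2: _ => [|i y1 y2 _ <-]; first by rewrite /tau (rmodp_small (p:=0)) ?coef0 // size_poly0 sA.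
by rewrite tauD.
Qed.

Lemma tau_mulA g : tau (g * A) = 0.
Proof. by rewrite /tau rmodp_mull // coef0. Qed.

Lemma tau_addmul g h : tau (g + h * A) = tau g.
Proof. by rewrite tauD tau_mulA addr0. Qed.

Lemma tau_drop p r : (p < n)%N -> (r < n)%N ->
  tau ('X^r * drop_poly p.+1 A) = (p == r)%:R.
Proof.
move=> pn rn.
have lc : A`_n = 1 by move/monicP: mA; rewrite /lead_coef sA.
case: (leqP r p) => rp.
  rewrite tau_small; last first.
    apply: (leq_trans (size_mul_leq _ _)); rewrite size_polyXn size_drop_poly sA.
    move: rp pn; move: (n) => n0; lia.
  rewrite coefXnM ifF; last by apply/negbTE; rewrite -leqNgt; lia.
  rewrite coef_drop_poly.
  case: (eqVneq p r) => [->|prn].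
    by have -> : (n.-1 - r + r.+1 = n)%N by lia.
  rewrite nth_default // sA; lia.
have -> : 'X^r * drop_poly p.+1 A = 'X^(r - p.+1) * A - 'X^(r - p.+1) * take_poly p.+1 A.
  have -> : 'X^r = 'X^(r - p.+1) * 'X^(p.+1) :> {poly R} by rewrite -exprD subnK.
  rewrite -[X in _ * X - _](poly_take_drop p.+1 A).
  move: ('X^(r - p.+1)) ('X^(p.+1)) (take_poly _ _) (drop_poly _ _) => a b c d; ring.
rewrite tauB [_ * A]mulrC mulrC tau_mulA sub0r tau_small; last first.
  apply: (leq_trans (size_mul_leq _ _)); rewrite size_polyXn.
  have := size_take_poly p.+1 A; move: (size _) => a; lia.
rewrite nth_default ?oppr0; last first.
  apply: (leq_trans (size_mul_leq _ _)); rewrite size_polyXn.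
  have := size_take_poly p.+1 A; move: (size _) => a; lia.
by rewrite eq_sym; case: eqP => // e; move: rp; rewrite e ltnn.
Qed.

End Tau.

Definition Hs n A C : 'M[R]_n := \matrix_(p < n, q < n) tau n A ('X^(p + q) * C).

Lemma Bez_Hs n A B C W : A \is monic -> size A = n.+1 -> (size B <= n)%N ->
  B * C = 1 + W * A -> Bez n A B *m Hs n A C = 1%:M.
Proof.
move=> mA sA sB hBC; apply/matrixP => p r; rewrite !mxE.
under eq_bigr => q _ do rewrite !mxE coef_bez -(tauZ _ mA).
rewrite -(tau_sum mA sA).
have -> : \sum_(i < n) (beta A B p)`_i *: ('X^(i + r) * C)
          = beta A B p * ('X^r * C).
  rewrite -[in RHS](sum_coefX (size_beta sA sB (ltn_ord p))) mulr_suml.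
  by apply: eq_bigr => i _; rewrite -scalerAl exprD mulrA.
have -> : beta A B p * ('X^r * C) = 'X^r * drop_poly p.+1 A
    + (W * ('X^r * drop_poly p.+1 A) - 'X^r * C * drop_poly p.+1 B) * A.
  rewrite /beta; move: ('X^r) (drop_poly p.+1 A) (drop_poly p.+1 B) => a b c.
  transitivity ((B * C) * (a * b) - A * c * (a * C)); first ring.
  rewrite hBC; ring.
rewrite (tau_addmul _ mA) (tau_drop mA sA) //.
Qed.

Lemma sylv_coef n A B (U V : {poly R}) (j : 'I_(n + n)) :
  (size U <= n)%N -> (size V <= n)%N ->
  \sum_(k < n + n) (match split k with inl i => U`_i | inr i => V`_i end)
     * sylv_nn n A B k j = (A * U + B * V)`_j.
Proof.
move=> hU hV.
have sl : forall i : 'I_n, split (lshift n i) = inl i := fun i => unsplitK (inl _ i).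
have sr : forall i : 'I_n, split (rshift n i) = inr i := fun i => unsplitK (inr _ i).
rewrite big_split_ord /= -[U in RHS](sum_coefX hU) -[V in RHS](sum_coefX hV).
rewrite !mulr_sumr coefD !coef_sum.
congr (_ + _); apply: eq_bigr => i _; rewrite mxE ?sl ?sr -scalerAr coefZ mulrC.
all: by rewrite mulrC [_ * (_ : {poly R})]mulrC.
Qed.

Lemma size_sumX m (c : 'I_m -> R) : (size (\sum_(i < m) c i *: 'X^i)%R <= m)%N.
Proof.
apply/leq_sizeP => j hj; rewrite coef_sum big1 // => i _.
rewrite coefZ coefXn (_ : (j == i) = false) ?mulr0 //; apply/negbTE.
by rewrite neq_ltn (leq_trans (ltn_ord i) hj) orbT.
Qed.

Lemma coef_sumX m (c : 'I_m -> R) (i : 'I_m) : (\sum_(k < m) c k *: 'X^k)`_i = c i.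
Proof.
rewrite coef_sum (bigD1 i) //= coefZ coefXn eqxx mulr1 big1 ?addr0 // => k ki.
rewrite coefZ coefXn (_ : (i == k :> nat) = false) ?mulr0 //; apply/negbTE.
by rewrite val_eqE eq_sym.
Qed.

Lemma size_AUBV n A B U V : (size A <= n.+1)%N -> (size B <= n.+1)%N ->
  (size U <= n)%N -> (size V <= n)%N -> (size (A * U + B * V)%R <= n + n)%N.
Proof.
move=> hA hB hU hV; apply: (leq_trans (size_add _ _)); rewrite geq_max.
apply/andP; split; apply: (leq_trans (size_mul_leq _ _)).
  by move: hA hU; move: (size A) (size U) => a b; lia.
by move: hB hV; move: (size B) (size V) => a b; lia.
Qed.

Definition solvable n A B := forall T, (size T <= n + n)%N ->
  exists U V, [/\ (size U <= n)%N, (size V <= n)%N & A * U + B * V = T].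

Lemma res_solvable n A B : (size A <= n.+1)%N -> (size B <= n.+1)%N ->
  res_nn n A B \is a GRing.unit -> solvable n A B.
Proof.
move=> sA sB hr T hT.
set M := sylv_nn n A B.
have Mu : M \in unitmx by rewrite unitmxE.
set t := \row_(j < n + n) T`_j.
set x := t *m invmx M.
set U := \sum_(i < n) x 0 (lshift n i) *: 'X^i.
set V := \sum_(i < n) x 0 (rshift n i) *: 'X^i.
have sU : (size U <= n)%N by apply: size_sumX.
have sV : (size V <= n)%N by apply: size_sumX.
have hx : forall k, x 0 k = match split k with inl i => U`_i | inr i => V`_i end.
  move=> k; rewrite -[k in LHS]splitK; case: (split k) => i /=.
    by rewrite coef_sumX.
  by rewrite coef_sumX.
exists U, V; split => //; apply/polyP => j.
case: (ltnP j (n + n)) => hj; last first.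
  rewrite !nth_default //; first exact: leq_trans hT hj.
  exact: leq_trans (size_AUBV sA sB sU sV) hj.
have e : (x *m M) 0 (Ordinal hj) = T`_j by rewrite mulmxKV // mxE.
rewrite -e -(sylv_coef A B (Ordinal hj) sU sV) mxE.
by apply: eq_bigr => k _; rewrite hx.
Qed.

Lemma solvable_res n A B : (size A <= n.+1)%N -> (size B <= n.+1)%N ->
  solvable n A B -> res_nn n A B \is a GRing.unit.
Proof.
move=> sA sB hs.
have f : forall i : 'I_(n + n), {UV : {poly R} * {poly R} |
    [/\ (size UV.1 <= n)%N, (size UV.2 <= n)%N & A * UV.1 + B * UV.2 = 'X^i]}.
  move=> i; apply: constructive_indefinite_description.
  have [|U [V [h1 h2 h3]]] := hs 'X^i; first by rewrite size_polyXn.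
  by exists (U, V).
set Xm := \matrix_(i < n + n, k < n + n)
  match split k with inl l => (sval (f i)).1`_l | inr l => (sval (f i)).2`_l end.
have hXM : Xm *m sylv_nn n A B = 1%:M.
  apply/matrixP => i j; rewrite !mxE.
  case: (svalP (f i)) => h1 h2 h3.
  rewrite -[in RHS](_ : (('X^i : {poly R})`_j = (i == j)%:R)); last first.
    by rewrite coefXn eq_sym.
  rewrite -h3 -(sylv_coef A B j h1 h2).
  by apply: eq_bigr => k _; rewrite mxE.
have [_ ] := mulmx1_unit hXM.
by rewrite unitmxE.
Qed.

Lemma mul_monic_small n A F : A \is monic -> size A = n.+1 ->
  (size (F * A)%R <= n)%N -> F = 0.
Proof.
move=> mA sA h; apply/eqP; apply/negPn/negP => hF.
move: h; rewrite size_Mmonic // sA.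
have : (0 < size F)%N by rewrite size_poly_gt0.
move: (size F) => a; lia.
Qed.

Lemma bez_uniq n A B C W U V : A \is monic -> size A = n.+1 ->
  B * C = 1 + W * A -> (size U <= n)%N -> (size V <= n)%N ->
  A * U + B * V = 0 -> U = 0 /\ V = 0.
Proof.
move=> mA sA hBC hU hV h.
have hV0 : V = 0.
  have eV : V = - (C * U + V * W) * A.
    have e : V = V * (B * C) - V * W * A by rewrite hBC; ring.
    rewrite [LHS]e.
    have e2 : B * V = - (A * U) by rewrite -{1}(addKr (A * U) (B * V)) h addr0.
    transitivity (C * (B * V) - V * W * A); first ring.
    rewrite e2; ring.
  have F0 : - (C * U + V * W) = 0 by apply: (mul_monic_small mA sA); rewrite -eV.
  by rewrite eV F0 mul0r.
split => //.
move: h; rewrite hV0 mulr0 addr0 => h.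
apply/eqP; apply/negPn/negP => hU0.
have : size (A * U) = (size A + size U).-1 by rewrite size_monicM.
by rewrite h size_poly0 sA; move: hU0; rewrite -size_poly_gt0; move: (size U) => a; lia.
Qed.

Lemma bezout_solvable n A B C W : A \is monic -> size A = n.+1 ->
  (size B <= n)%N -> B * C = 1 + W * A -> solvable n A B.
Proof.
move=> mA sA sB hBC T hT.
have A0 : A != 0 by apply: monic_neq0.
set q := rdivp (T * C) A; set r := rmodp (T * C) A.
have eTC : T * C = q * A + r by rewrite /q /r -rdivp_eq.
set U := B * q - T * W.
have eT : A * U + B * r = T.
  have e : T = T * (B * C) - T * W * A by rewrite hBC; ring.
  rewrite [RHS]e; transitivity (B * (q * A + r) - T * W * A); first by rewrite /U; ring.
  by rewrite -eTC; ring.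
exists U, r; split => //; last first.
  by move: (ltn_rmodpN0 (T * C) A0); rewrite -/r sA ltnS.
have hr : (size r <= n)%N by move: (ltn_rmodpN0 (T * C) A0); rewrite -/r sA ltnS.
have hAU : (size (A * U)%R <= n + n)%N.
  have -> : A * U = T - B * r by rewrite -eT addrK.
  apply: (leq_trans (size_add _ _)); rewrite size_opp geq_max hT /=.
  apply: (leq_trans (size_mul_leq _ _)); move: sB hr; move: (size B) (size r) => a b; lia.
have [->|U0] := eqVneq U 0; first by rewrite size_poly0.
move: hAU; rewrite size_monicM // sA; move: (size U) => a; lia.
Qed.

Lemma size_subB (f g : {poly R}) m : (size f <= m)%N -> (size g <= m)%N -> (size (f - g)%R <= m)%N.
Proof.
move=> hf hg; apply: (leq_trans (size_add _ _)); rewrite size_opp geq_max hf hg.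
by [].
Qed.

Lemma inF_inv n A B : (0 < n)%N -> inF n A B -> exists C W, B * C = 1 + W * A.
Proof.
move=> n0 [mA sA sB hr].
have hs : solvable n A B := res_solvable (eq_leq sA) (leq_trans sB (leqnSn n)) hr.
have [|U [C [_ _ h]]] := hs 1.
  by rewrite size_poly1; move: n0; lia.
exists C, (- U); rewrite -h; ring.
Qed.

Lemma monic_split n A : A \is monic -> size A = n.+1 -> (size (A - 'X^n)%R <= n)%N.
Proof.
move=> mA sA; apply/leq_sizeP => j hj; rewrite coefB coefXn.
have lc : A`_n = 1 by move/monicP: mA; rewrite /lead_coef sA.
case: (ltngtP j n) => h; first by move: hj h; lia.
  by rewrite nth_default ?subr0 // sA.
by rewrite h lc subrr.
Qed.

Lemma spec_lead n A B U V : (0 < n)%N -> A \is monic -> size A = n.+1 -> (size B <= n)%N ->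
  (size U <= n)%N -> (size V <= n)%N -> A * U + B * V = 'X^((n + n).-1) -> U`_n.-1 = 1.
Proof.
move=> n0 mA sA sB sU sV h.
have := congr1 (fun p : {poly R} => p`_((n + n).-1)) h => /=.
rewrite coefXn eqxx coefD [(B * V)`__]nth_default; last first.
  apply: (leq_trans (size_mul_leq _ _)); move: sB sV; move: (size B) (size V) => a b; lia.
rewrite -[A](subrK 'X^n) mulrDl coefD [(_ * U)`__]nth_default; last first.
  apply: (leq_trans (size_mul_leq _ _)); move: (monic_split mA sA) sU.
  move: (size (A - _)) (size U) => a b; lia.
rewrite coefXnM ifF; last by apply/negbTE; rewrite -leqNgt; lia.
by rewrite add0r addr0 (_ : ((n + n).-1 - n = n.-1)%N) //; lia.
Qed.

Lemma UV1P n A B : (0 < n)%N -> inF n A B -> UV1_spec n A B (UV1 n A B).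
Proof.
move=> n0 [mA sA sB hr]; rewrite /UV1; apply: epsilon_spec.
have hs : solvable n A B := res_solvable (eq_leq sA) (leq_trans sB (leqnSn n)) hr.
have [|U [V [hU hV h]]] := hs 'X^((n + n).-1).
  by rewrite size_polyXn; move: n0; lia.
exists (U, V); split => //=.
have l := spec_lead n0 mA sA sB hU hV h.
apply/eqP; rewrite eqn_leq hU /=.
case: (ltnP (size U) n) => // hlt.
move: l; rewrite nth_default; last by move: hlt n0; move: (size U) => a; lia.
by move/eqP; rewrite eq_sym oner_eq0.
Qed.

Lemma UV1_uniq n A B U V : (0 < n)%N -> inF n A B -> UV1_spec n A B (U, V) -> UV1 n A B = (U, V).
Proof.
move=> n0 hF [/= hU hV h].
have [/= hU1 hV1 h1] := UV1P n0 hF.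
have [C [W hBC]] := inF_inv n0 hF.
case: hF => mA sA sB hr.
have [|||e1 e2] := bez_uniq (U := (UV1 n A B).1 - U) (V := (UV1 n A B).2 - V) mA sA hBC.
- by apply: size_subB; rewrite ?hU ?hU1.
- exact: size_subB.
- by rewrite !mulrBr addrACA -opprD h1 h subrr.
move/eqP: e1; rewrite subr_eq0 => /eqP e1.
move/eqP: e2; rewrite subr_eq0 => /eqP e2.
by rewrite -e1 -e2; case: (UV1 n A B).
Qed.

Lemma Hank_Hs n A B C W : A \is monic -> size A = n.+1 -> (size B <= n)%N ->
  B * C = 1 + W * A -> Hank n A B = Hs n A C /\ Hs n A C \in unitmx.
Proof.
move=> mA sA sB hBC.
have e := Bez_Hs mA sA sB hBC.
have [bu hu] := mulmx1_unit e.
by split => //; rewrite /Hank -[RHS](mulKmx bu) e mulmx1.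
Qed.

Lemma phi_tau n A B C W : (0 < n)%N -> inF n A B -> B * C = 1 + W * A ->
  phi n A B = - tau n A ('X^((n + n).-1) * C).
Proof.
move=> n0 hF hBC; have [hU hV h] := UV1P n0 hF.
case: hF => mA sA sB _.
rewrite /phi -h.
have -> : (A * (UV1 n A B).1 + B * (UV1 n A B).2) * C
   = (UV1 n A B).2 + ((UV1 n A B).2 * W + (UV1 n A B).1 * C) * A.
  move: ((UV1 n A B).1) ((UV1 n A B).2) => u v.
  transitivity (v * (B * C) + A * u * C); first ring.
  rewrite hBC; ring.
by rewrite (tau_addmul _ mA) (tau_small sA).
Qed.

Lemma part1 n A B : (0 < n)%N -> inF n A B -> inH (Hank n A B).
Proof.
move=> n0 hF; have [C [W hBC]] := inF_inv n0 hF.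
case: hF => mA sA sB _.
have [-> hu] := Hank_Hs mA sA sB hBC.
split => //.
  by apply/matrixP => p q; rewrite !mxE addnC.
by move=> p q p' q' e; rewrite !mxE e.
Qed.

Lemma part4 n A B h : (0 < n)%N -> inF n A B -> inF n (A + h%:P * B) B.
Proof.
move=> n0 [mA sA sB hr].
have sh : (size (h%:P * B)%R < size A)%N.
  rewrite sA ltnS; apply: (leq_trans (size_mul_leq _ _)).
  have := size_polyC_leq1 h; move: sB; move: (size B) (size h%:P) => a b; lia.
split => //.
- by rewrite monicE lead_coefDl // -monicE.
- by rewrite size_polyDl.
apply: solvable_res.
- by rewrite size_polyDl // sA.
- exact: leq_trans sB (leqnSn n).
have hs : solvable n A B := res_solvable (eq_leq sA) (leq_trans sB (leqnSn n)) hr.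
move=> T hT; have [U [V [hU hV e]]] := hs T hT.
exists U, (V - h%:P * U); split => //.
  apply: size_subB => //; apply: (leq_trans (size_mul_leq _ _)).
  have := size_polyC_leq1 h; move: hU; move: (size U) (size h%:P) => a b; lia.
by rewrite -e; ring.
Qed.

Lemma part5 n A B h : (0 < n)%N -> inF n A B ->
  Hank n (A + h%:P * B) B = Hank n A B /\ phi n (A + h%:P * B) B = phi n A B + h.
Proof.
move=> n0 hF; split.
  have e : bez_num (A + h%:P * B) B = bez_num A B.
    rewrite /bez_num rmorphD rmorphM /= map_polyC /= rmorphD rmorphM /=.
    by move: (h%:P%:P) => c; ring.
  by rewrite /Hank /Bez /bez_quot e.
have hF' := part4 h n0 hF.
have [hU hV e] := UV1P n0 hF.
have l : ((UV1 n A B).1)`_n.-1 = 1.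
  case: hF => mA sA sB _; exact: spec_lead n0 mA sA sB (eq_leq hU) hV e.
rewrite /phi (UV1_uniq (U := (UV1 n A B).1) (V := (UV1 n A B).2 - h%:P * (UV1 n A B).1) n0 hF') /=.
  by rewrite coefB coefCM l mulr1 opprB addrC.
split => //=.
  apply: size_subB => //; apply: (leq_trans (size_mul_leq _ _)).
  have := size_polyC_leq1 h; rewrite hU; move: (size h%:P) => b; lia.
by rewrite -e; ring.
Qed.

Lemma tau_rec n A C k : A \is monic -> size A = n.+1 ->
  \sum_(j < n.+1) A`_j * tau n A ('X^(k + j) * C) = 0.
Proof.
move=> mA sA.
transitivity (tau n A ('X^k * C * A)); last exact: tau_mulA.
rewrite -[X in _ * X](sum_coefX (eq_leq sA)) mulr_sumr (tau_sum mA sA).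
apply: eq_bigr => j _.
by rewrite -scalerAr -(tauZ _ mA) exprD mulrAC.
Qed.

Lemma tau_rec_top n A C k : A \is monic -> size A = n.+1 ->
  tau n A ('X^(k + n) * C) = - \sum_(j < n) A`_j * tau n A ('X^(k + j) * C).
Proof.
move=> mA sA; have := tau_rec C k mA sA.
have lc : A`_n = 1 by move/monicP: mA; rewrite /lead_coef sA.
rewrite big_ord_recr /= lc mul1r => /eqP; rewrite addrC addr_eq0 => /eqP ->.
by [].
Qed.

Lemma tau_rmodp n A g k : A \is monic -> size A = n.+1 ->
  tau n A ('X^k * rmodp g A) = tau n A ('X^k * g).
Proof.
move=> mA sA.
rewrite [in RHS](rdivp_eq mA g) mulrDr addrC mulrA.
by rewrite (tau_addmul _ mA).
Qed.

Lemma tau_lead n A (E : {poly R}) : A \is monic -> size A = n.+1 -> (size E <= n)%N ->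
  (forall k, (k < n)%N -> tau n A ('X^k * E) = 0) -> E = 0.
Proof.
move=> mA sA sE h; apply/eqP; apply/negPn/negP => E0.
have d0 : (0 < size E)%N by rewrite size_poly_gt0.
have hk : (n - size E < n)%N by move: d0 sE; move: (size E) => d; lia.
have := h _ hk.
rewrite (tau_small sA); last first.
  rewrite size_monicM ?monicXn // size_polyXn; move: d0 sE; move: (size E) => d; lia.
rewrite coefXnM ifF; last by apply/negbTE; rewrite -leqNgt; move: d0 sE; move: (size E) => d; lia.
have -> : (n.-1 - (n - size E) = (size E).-1)%N by move: d0 sE; move: (size E) => d; lia.
by move=> /eqP; rewrite -/(lead_coef E) lead_coef_eq0 (negbTE E0).
Qed.

Lemma part2 n A B A' B' : (0 < n)%N -> inF n A B -> inF n A' B' ->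
  Hank n A B = Hank n A' B' -> phi n A B = phi n A' B' -> A = A' /\ B = B'.
Proof.
move=> n0 hF hF' eH eP.
have [C [W hBC]] := inF_inv n0 hF.
have [C' [W' hBC']] := inF_inv n0 hF'.
rewrite (phi_tau n0 hF hBC) (phi_tau n0 hF' hBC') in eP.
case: hF => mA sA sB _; case: hF' => mA' sA' sB' _.
have [eH1 Hu] := Hank_Hs mA sA sB hBC.
have [eH2 _] := Hank_Hs mA' sA' sB' hBC'.
rewrite eH1 eH2 in eH.
set t := fun k => tau n A ('X^k * C).
set t' := fun k => tau n A' ('X^k * C').
have ett : forall k, (k < n + n)%N -> t k = t' k.
  move=> k hk.
  case: (ltnP k (n + n).-1) => hk2; last first.
    have -> : k = (n + n).-1 by move: hk hk2; lia.
    by apply: oppr_inj.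
  have hp : (minn k n.-1 < n)%N by move: n0; lia.
  have hq : (k - minn k n.-1 < n)%N by move: hk2; lia.
  have := congr1 (fun M : 'M[R]_n => M (Ordinal hp) (Ordinal hq)) eH.
  rewrite !mxE /= subnKC ?geq_minl //.
have hrec : forall (A0 C0 : {poly R}), A0 \is monic -> size A0 = n.+1 ->
    Hs n A0 C0 *m \col_(j < n) A0`_j = \col_(k < n) (- tau n A0 ('X^(k + n) * C0)).
  move=> A0 C0 m0 s0; apply/matrixP => k i; rewrite !mxE (tau_rec_top _ _ m0 s0).
  by rewrite opprK; apply: eq_bigr => j _; rewrite !mxE mulrC.
have eA : A = A'.
  have e1 := hrec A C mA sA; have e2 := hrec A' C' mA' sA'.
  have e3 : \col_(k < n) (- tau n A ('X^(k + n) * C)) = \col_(k < n) (- tau n A' ('X^(k + n) * C')).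
    apply/matrixP => k i; rewrite !mxE; congr (- _); apply: ett.
    by move: (ltn_ord k); lia.
  rewrite e3 -e2 -eH in e1.
  have e4 := congr1 (mulmx (invmx (Hs n A C))) e1.
  rewrite !mulKmx // in e4.
  apply/polyP => j; case: (ltngtP j n) => hj.
  - by have := congr1 (fun M : 'cV[R]_n => M (Ordinal hj) ord0) e4; rewrite !mxE.
  - by rewrite !nth_default // ?sA ?sA'.
  have lc : A`_n = 1 by move/monicP: mA; rewrite /lead_coef sA.
  have lc' : A'`_n = 1 by move/monicP: mA'; rewrite /lead_coef sA'.
  by rewrite hj lc lc'.
subst A'.
have eC : C - C' = rdivp (C - C') A * A.
  have e0 : rmodp (C - C') A = 0.
    apply: (tau_lead mA sA).
      by move: (ltn_rmodpN0 (C - C') (monic_neq0 mA)); rewrite sA ltnS.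
    move=> k hk; rewrite (tau_rmodp _ _ mA sA) mulrBr (tauB _ mA).
    have := ett k; rewrite /t /t' => ->; first by rewrite subrr.
    by move: hk; lia.
  by rewrite {1}(rdivp_eq mA (C - C')) e0 addr0.
split => //.
move: eC; set Q := rdivp (C - C') A => eC.
have eB : B - B' = (B' * W - B * W' - B * B' * Q) * A.
  have e : B - B' = B * (B' * C') - B' * (B * C) - B * W' * A + B' * W * A.
    rewrite hBC hBC'; ring.
  rewrite e.
  have -> : B * (B' * C') - B' * (B * C) = - (B * B' * (C - C')) by ring.
  rewrite eC; ring.
have F0 : B' * W - B * W' - B * B' * Q = 0.
  by apply: (mul_monic_small mA sA); rewrite -eB; apply: size_subB.
by apply/eqP; rewrite -subr_eq0 eB F0 mul0r.
Qed.

Lemma part3 n (H : 'M[R]_n.+1) (c : R) : inH H ->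
  exists A B, [/\ inF n.+1 A B, Hank n.+1 A B = H & phi n.+1 A B = c].
Proof.
case=> _ Hu Hh.
pose s k := if (k <= n + n)%N then H (inord (minn k n)) (inord (k - minn k n)) else - c.
have hHs : forall p q : 'I_n.+1, H p q = s (p + q)%N.
  move=> p q; have hp := ltn_ord p; have hq := ltn_ord q.
  rewrite /s ifT; last by move: hp hq; lia.
  apply: Hh; rewrite !inordK; first by rewrite subnKC // geq_minl.
    by move: hp hq; lia.
  by move: hp hq; lia.
pose v := \col_(k < n.+1) (- s (k + n.+1)%N).
pose a := invmx H *m v.
pose A := 'X^(n.+1) + \sum_(j < n.+1) a j 0 *: 'X^j.
have sS := size_sumX (fun j : 'I_n.+1 => a j 0).
have sA : size A = n.+2.
  by rewrite /A size_polyDl size_polyXn // ltnS.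
have mA : A \is monic.
  by rewrite monicE /A lead_coefDl ?lead_coefXn // size_polyXn ltnS.
have cA : forall j : 'I_n.+1, A`_j = a j 0.
  move=> j; rewrite /A coefD coefXn coef_sumX.
  by rewrite (_ : (j == n.+1 :> nat) = false) ?add0r //; apply/negbTE; rewrite neq_ltn ltn_ord.
have recS : forall k, (k < n.+1)%N -> s (k + n.+1)%N = - \sum_(j < n.+1) A`_j * s (k + j)%N.
  move=> k hk.
  have e : H *m a = v by rewrite /a mulKVmx.
  have := congr1 (fun M : 'cV[R]_n.+1 => M (Ordinal hk) ord0) e; rewrite !mxE /= => eq.
  rewrite -[s _]opprK -eq.
  congr (- _); apply: eq_bigr => j _; by rewrite cA hHs mulrC.
pose C := \sum_(p < n.+1) s p *: drop_poly p.+1 A.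
pose t k := tau n.+1 A ('X^k * C).
have tlow : forall r, (r < n.+1)%N -> t r = s r.
  move=> r hr; rewrite /t /C mulr_sumr (tau_sum mA sA).
  rewrite (bigD1 (Ordinal hr)) //= big1 ?addr0.
    by rewrite -scalerAr (tauZ _ mA) (tau_drop mA sA) // eqxx mulr1.
  move=> p hp; rewrite -scalerAr (tauZ _ mA) (tau_drop mA sA) //.
  by rewrite (_ : (p == r :> nat) = false) ?mulr0 //; apply/negbTE; rewrite -val_eqE in hp.
have tall : forall k, (k < n.+1 + n.+1)%N -> t k = s k.
  elim/ltn_ind => k IH hk.
  case: (ltnP k n.+1) => hk1; first exact: tlow.
  have ek : k = (k - n.+1 + n.+1)%N by rewrite subnK.
  rewrite ek /t (tau_rec_top _ _ mA sA) recS; last by move: hk; lia.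
  congr (- _); apply: eq_bigr => j _; rewrite -/(t _) IH //.
    by move: (ltn_ord j) hk1; lia.
  by move: (ltn_ord j) hk; lia.
have eHs : Hs n.+1 A C = H.
  apply/matrixP => p q; rewrite mxE hHs -/(t _) tall //.
  by move: (ltn_ord p) (ltn_ord q); lia.
pose e := \col_(p < n.+1) tau n.+1 A 'X^p.
pose b := invmx H *m e.
pose B := \sum_(q < n.+1) b q 0 *: 'X^q.
have sB : (size B <= n.+1)%N := size_sumX _.
have E0 : rmodp (B * C - 1) A = 0.
  apply: (tau_lead mA sA).
    by move: (ltn_rmodpN0 (B * C - 1) (monic_neq0 mA)); rewrite sA ltnS.
  move=> k hk; rewrite (tau_rmodp _ _ mA sA) mulrBr (tauB _ mA) mulr1.
  suff -> : tau n.+1 A ('X^k * (B * C)) = tau n.+1 A 'X^k by rewrite subrr.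
  have eb : H *m b = e by rewrite /b mulKVmx.
  have := congr1 (fun M : 'cV[R]_n.+1 => M (Ordinal hk) ord0) eb; rewrite !mxE => <-.
  rewrite /B mulr_suml mulr_sumr (tau_sum mA sA); apply: eq_bigr => q _.
  rewrite -scalerAl -scalerAr (tauZ _ mA) mulrA -exprD hHs -tall; last first.
    by rewrite /=; move: (ltn_ord q) hk; lia.
  by rewrite mulrC.
have hBC : B * C = 1 + rdivp (B * C - 1) A * A.
  have e1 : B * C - 1 = rdivp (B * C - 1) A * A.
    by rewrite {1}(rdivp_eq mA (B * C - 1)) E0 addr0.
  by rewrite -e1 addrC subrK.
have hF : inF n.+1 A B.
  split => //; apply: solvable_res; first by rewrite sA.
    exact: leq_trans sB (leqnSn _).
  exact: bezout_solvable mA sA sB hBC.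
exists A, B; split => //.
  by have [-> _] := Hank_Hs mA sA sB hBC.
rewrite (phi_tau _ hF hBC) // -/(t _) tall; last by lia.
by rewrite /s ifF ?opprK //; apply/negbTE; rewrite -ltnNge; lia.
Qed.
End P.

Theorem propositionC5 (k : fieldType) (R : comUnitAlgType k) (n : nat) :
  (0 < n)%N ->
  [/\ (* Hank_n x phi_n maps F_n(R) into H_n(R) x A^1(R) *)
      (forall A B : {poly R}, inF n A B -> inH (Hank n A B)),
      (* injective on F_n(R) *)
      (forall A B A' B' : {poly R}, inF n A B -> inF n A' B' ->
         Hank n A B = Hank n A' B' -> phi n A B = phi n A' B' ->
         A = A' /\ B = B'),
      (* surjective onto H_n(R) x A^1(R) *)
      (forall (H : 'M[R]_n) (c : R), inH H ->
         exists A B : {poly R}, [/\ inF n A B, Hank n A B = H & phi n A B = c]),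
      (* the G_a-action h . A/B = (A + hB)/B preserves F_n(R) *)
      (forall (A B : {poly R}) (h : R), inF n A B -> inF n (A + h%:P * B) B) &
      (* G_a-equivariance: trivial action on H_n, translation on A^1 *)
      (forall (A B : {poly R}) (h : R), inF n A B ->
         Hank n (A + h%:P * B) B = Hank n A B /\
         phi n (A + h%:P * B) B = phi n A B + h)].
Proof.
move=> n0; split.
- by move=> A B; apply: part1.
- by move=> A B A' B'; apply: part2.
- by case: n n0 => // n _ H c hH; apply: part3.
- by move=> A B h; apply: part4.
- by move=> A B h; apply: part5.
Qed.
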